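(* Let $\langle r_n\rangle_{n=1}^\infty$ be a sequence in $\mathbb{N}$ and let $U=\bigcup_{n=1}^\infty\mathcal{P}_n({}^{r_n}\mathbb{N})$. Then: (i) there is a family $\{B_\alpha:\alpha<2^\omega\}$ of infinite subsets of $U$ with $B_\alpha\cap B_\beta$ finite for all $\alpha<\beta<2^\omega$, such that for every $\alpha<2^\omega$ and every $L\in U$ there exist $L'\in B_\alpha$ and $a\in\mathbb{N}$ with $L'=L+a$; (ii) there is a family $\{B_\alpha:\alpha<\omega\}$ of pairwise disjoint infinite subsets of $U$ such that for every $\alpha<\omega$ and every $L\in U$ there exist $L'\in B_\alpha$ and $a\in\mathbb{N}$ with $L'=L+a$.
   Context: $\mathbb{N}=\{1,2,\dots\}$. For a set $X$ and $n\in\mathbb{N}$, $\mathcal{P}_n(X)$ is the set of subsets of $X$ of size $n$, and ${}^{m}X$ is the set of sequences of length $m$ in $X$ (functions $\{1,\dots,m\}\to X$). For $f\in{}^m\mathbb{N}$ and $a\in\mathbb{Z}$, $f+a$ is the function $t\mapsto f(t)+a$, and for $L\subseteq{}^m\mathbb{N}$, $L+a=\{f+a: f\in L\}$. *)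

(* Defs.v *)
From mathcomp Require Import all_boot.
From mathcomp Require Export boolp classical_sets functions cardinality.
Set Implicit Arguments. Unset Strict Implicit. Unset Printing Implicit Defensive.
Local Open Scope classical_set_scope.

(* ℕ = {1,2,...}.  A sequence of length m in ℕ is encoded as an s : seq nat
   with size s = m and all entries positive (positions 0..m-1 stand for 1..m). *)
Definition seqN (m : nat) : set (seq nat) :=
  [set s | size s = m /\ all (fun x => 0 < x) s].

Definition Pn (n : nat) (X : set (seq nat)) : set (set (seq nat)) :=
  [set L | L `<=` X /\ (L #= `I_n)%card].

Definition Ufam (r : nat -> nat) : set (set (seq nat)) :=
  [set L | exists n, 0 < n /\ Pn n (seqN (r n)) L].

Definition shiftf (a : nat) (f : seq nat) : seq nat := map (fun x => x + a) f.
Definition shiftL (a : nat) (L : set (seq nat)) : set (seq nat) := shiftf a @` L.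

Definition catches_translates (r : nat -> nat) (B : set (set (seq nat))) : Prop :=
  forall L, Ufam r L -> exists L' a, B L' /\ 0 < a /\ L' = shiftL a L.

(* Main.v *)
Require Import Defs.
From mathcomp Require Import all_boot zify.
From mathcomp Require Import boolp classical_sets functions cardinality.
Local Open Scope classical_set_scope.

Lemma finite_subsets (T : eqType) (Y : set T) :
  finite_set Y -> finite_set [set L | L `<=` Y].
Proof.
move=> /finite_seqP [xs ->].
apply: (sub_finite_set (B := (fun m : (size xs).-tuple bool => [set` mask m xs]) @` setT)).
  move=> L /= HL; exists (map_tuple (fun x => `[< L x >]) (in_tuple xs)) => //.
  apply/seteqP; split => x /=.
    by rewrite -filter_mask mem_filter => /andP [/asboolW].
  move=> Lx; rewrite -filter_mask mem_filter; apply/andP; split.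
    exact: asboolT.
  exact: HL.
by apply: finite_image; apply: finite_finset.
Qed.

Lemma finite_Y n K :
  finite_set [set s : seq nat | size s <= n /\ all (fun x => x <= K) s].
Proof.
elim: n => [|n IH].
  apply: (sub_finite_set (B := [set [::]])); last exact: finite_set1.
  by case=> [|x s] //= [].
apply: (sub_finite_set (B := [set [::]] `|` (fun p : nat * seq nat => p.1 :: p.2) @`
   ([set x | x <= K] `*` [set s : seq nat | size s <= n /\ all (fun x => x <= K) s]))).
  case=> [|x s] /= [hs ha]; first by left.
  right; exists (x, s) => //=; move/andP: ha => [hx ha]; split => //.
rewrite finite_setU; split; first exact: finite_set1.
apply: finite_image; apply: finite_setX => //.
apply: (sub_finite_set (B := [set` iota 0 K.+1])) => //.
by move=> x /= hx; change (x \in iota 0 K.+1); rewrite mem_iota; lia.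
Qed.

Lemma inj_unbounded (h : nat -> nat) : injective h -> forall K, exists n, K <= h n.
Proof.
move=> hi K; case: (pselect (exists n, K <= h n)) => // hn; exfalso.
have hlt : forall n, h n < K by move=> n; rewrite ltnNge; apply/negP => H; apply: hn; exists n.
have H := @uniq_leq_size _ (map h (iota 0 K.+1)) (iota 0 K).
rewrite map_inj_uniq // iota_uniq size_map !size_iota ltnn in H.
have Hs : {subset map h (iota 0 K.+1) <= iota 0 K}.
  by move=> y /mapP [x _ ->]; rewrite mem_iota hlt.
by have := H isT Hs.
Qed.
Definition BB (r : nat -> nat) (A : set nat) : set (set (seq nat)) :=
  [set L | Ufam r L /\ exists t, A t /\
     (forall s, L s -> size s <= t /\ all (fun x => t <= x <= t.*2) s) /\
     exists s, L s /\ t \in s].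

Lemma BB_sub r A : BB r A `<=` Ufam r.
Proof. by move=> L []. Qed.

Lemma BB_mono r A A' : A `<=` A' -> BB r A `<=` BB r A'.
Proof. by move=> H L [hU [t [ht rest]]]; split => //; exists t; split => //; apply: H. Qed.

Lemma BBI r A A' : BB r A `&` BB r A' `<=` BB r (A `&` A').
Proof.
move=> L [[hU [t [ht [h1 [s [Ls ts]]]]]] [_ [t' [ht' [h1' [s' [Ls' ts']]]]]]].
have e : t = t'.
  have /allP a1 := proj2 (h1 s' Ls').
  have l1 := a1 t' ts'.
  have /allP a2 := proj2 (h1' s Ls).
  have l2 := a2 t ts.
  move/andP: l1 => [l1 _]; move/andP: l2 => [l2 _]; apply/eqP; rewrite eqn_leq l1 l2 //.
subst t'; split => //; exists t; split => //; split => //; exists s; split => //.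
Qed.

Lemma BB_bounded_finite r A T : (forall t, A t -> t <= T) -> finite_set (BB r A).
Proof.
move=> hT.
apply: (sub_finite_set (B := [set L | L `<=` [set s : seq nat | size s <= T /\ all (fun x => x <= T.*2) s]])); last first.
  by apply: finite_subsets; apply: finite_Y.
move=> L [_ [t [ht [h1 _]]]] s Ls; have [hs ha] := h1 s Ls; have tT := hT t ht.
split; first lia.
apply/allP => x xs; have /andP [_ hx] := allP ha x xs; rewrite -!addnn in hx *; lia.
Qed.

Lemma BB0 r : BB r set0 = set0.
Proof. by apply/seteqP; split => L // [_ [t []]]. Qed.
Definition unbounded (A : set nat) := forall K, exists t, A t /\ K <= t.

Lemma Ufam_shift r L a : 0 < a -> Ufam r L -> Ufam r (shiftL a L).
Proof.
move=> a0 [n [n0 [hsub hc]]]; exists n; split => //; split.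
  move=> _ [s Ls <-]; have [hs ha] := hsub s Ls; split; first by rewrite size_map.
  by rewrite all_map; apply/allP => x _ /=; lia.
apply: card_eq_trans hc; apply: inj_card_eq => x y _ _.
by apply: inj_map => u v /= /eqP; rewrite eqn_add2r => /eqP.
Qed.

Lemma BB_catches r A : (forall n, 0 < n -> 0 < r n) ->
  unbounded A -> catches_translates r (BB r A).
Proof.
move=> hr hA L hL; have hL' := hL; case: hL' => [n [n0 [hsub hc]]].
have /finite_seqP [l El] : finite_set L by exists n.
subst L.
case: l hL hsub hc => [|s0 l] hL hsub hc.
  have e0 : [set` [::] : seq (seq nat)] = set0 by apply/seteqP; split => x.
  exfalso; move: hc; rewrite e0 card_eq_sym card_eq0 => /eqP /seteqP [/(_ 0%N) H _].
  by have := H n0.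
have hs0 : [set` s0 :: l] s0 by rewrite /= mem_head.
have [sz0 _] := hsub s0 hs0.
have hex : exists x, x \in flatten (s0 :: l).
  case: s0 hs0 sz0 {hsub hL hc} => [|x s0] _ sz0; first by have := hr n n0; rewrite -sz0.
  by exists x; rewrite /= mem_head.
case: (ex_minnP hex) => m min_in min_le.
set ls := s0 :: l in hL hsub hc min_in min_le hex hs0 *.
pose M := \max_(x <- flatten ls) x.
pose R := \max_(s <- ls) size s.
have xM : forall s x, s \in ls -> x \in s -> m <= x <= M.
  move=> s x sl xs; have xf : x \in flatten ls by apply/flattenP; exists s.
  by rewrite min_le // (leq_bigmax_seq (F := fun x => x) x xf).
have sR : forall s, s \in ls -> size s <= R.
  by move=> s sl; rewrite (leq_bigmax_seq (F := size) s sl).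
clearbody M R.
have [t [At tK]] := hA (M + R).+1.
have mM : m <= M.
  by move/flattenP: min_in => [s sl ms]; have /andP [] := xM s m sl ms.
exists (shiftL (t - m) [set` ls]), (t - m); split; last by split => //; lia.
split; first by apply: Ufam_shift => //; lia.
exists t; split => //; split.
  move=> _ [s sl <-]; rewrite size_map; split; first by apply: leq_trans (sR s sl) _; lia.
  rewrite all_map; apply/allP => x xs /=; have /andP [h1 h2] := xM s x sl xs.
  rewrite -addnn; apply/andP; split; lia.
move/flattenP: min_in => [s sl ms]; exists (shiftf (t - m) s); split.
  by exists s.
apply/mapP; exists m => //; lia.
Qed.
Lemma unbounded_infinite (A : set nat) : unbounded A -> infinite_set A.
Proof.
move=> hA /finite_seqP [s Es].
have [t [At tK]] := hA (\max_(x <- s) x).+1.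
have ts : t \in s by move: At; rewrite Es.
have := leq_bigmax_seq (F := fun x => x) (P := xpredT) t ts isT.
by rewrite leqNgt tK.
Qed.

Lemma BB_infinite r A : 0 < r 1 -> unbounded A -> infinite_set (BB r A).
Proof.
move=> r1 hA.
pose A' := [set t | A t /\ r 1 <= t].
have iA' : infinite_set A'.
  apply: unbounded_infinite => K; have [t [At tK]] := hA (K + r 1).
  by exists t; split; [split => //|]; lia.
pose f := fun t : nat => [set nseq (r 1) t].
have finj : {in A' &, injective f}.
  move=> x y _ _ /seteqP [H _]; have e : nseq (r 1) x = nseq (r 1) y by apply: H.
  by move: e; case: (r 1) r1 => // k _ [].
have sub : f @` A' `<=` BB r A.
  move=> _ [t [At tr] <-]; split.
    exists 1%N; split => //; split; last exact: card_set1.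
    move=> s /= ->; split; first by rewrite size_nseq.
    by rewrite all_nseq; apply/orP; right => /=; lia.
  exists t; split => //; split.
    move=> s /= ->; rewrite size_nseq; split => //.
    by rewrite all_nseq -addnn; apply/orP; right => /=; apply/andP; split; lia.
  exists (nseq (r 1) t); split => //; rewrite mem_nseq r1 /=.
  by [].
move=> hfin; apply: iA'.
have hf : finite_set (f @` A') by apply: sub_finite_set hfin.
apply: card_le_finite hf.
by have := inj_card_eq finj; rewrite card_eq_le => /andP [].
Qed.
Definition gA (al : set nat) (n : nat) : nat := pickle (mkseq (fun i => `[< al i >]) n).
Definition gB (k n : nat) : nat := pickle (k, n).

Lemma gA_inj al : injective (gA al).
Proof. by move=> n m /(pcan_inj pickleK) /(congr1 size); rewrite !size_mkseq. Qed.

Lemma gB_inj k : injective (gB k).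
Proof. by move=> n m /(pcan_inj pickleK) [->]. Qed.

Lemma range_unbounded (h : nat -> nat) : injective h -> unbounded (range h).
Proof. by move=> hi K; have [n hn] := @inj_unbounded h hi K; exists (h n); split => //; exists n. Qed.

Theorem lemma3p1 (r : nat -> nat) (hr : forall n, 0 < n -> 0 < r n) :
  (exists B : set nat -> set (set (seq nat)),
      (forall al, B al `<=` Ufam r /\ infinite_set (B al)) /\
      (forall al be, al <> be -> finite_set (B al `&` B be)) /\
      (forall al, catches_translates r (B al)))
  /\
  (exists B : nat -> set (set (seq nat)),
      (forall al, B al `<=` Ufam r /\ infinite_set (B al)) /\
      (forall al be, al <> be -> B al `&` B be = set0) /\
      (forall al, catches_translates r (B al))).
Proof.
have r1 := hr 1%N isT.
split.
  exists (fun al => BB r (range (gA al))); split.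
    move=> al; split; first exact: BB_sub.
    by apply: BB_infinite => //; apply: range_unbounded; apply: gA_inj.
  split; last by move=> al; apply: BB_catches => //; apply: range_unbounded; apply: gA_inj.
  move=> al be hne.
  have [i hi] : exists i, `[< al i >] != `[< be i >].
    apply: contra_notP hne => hn; apply: funext => i; apply: propext.
    have e : `[< al i >] = `[< be i >].
      by apply/eqP; apply: contra_notP hn => h; exists i; apply/negP.
    by split => h; apply: asboolW; [rewrite -e | rewrite e]; apply: asboolT.
  apply: sub_finite_set (@BBI r _ _) _.
  apply: (@BB_bounded_finite r _ (\max_(n <- iota 0 i.+1) gA al n)).
  move=> _ [[n _ <-] [m _ e]].
  have e' := pcan_inj pickleK e.
  have nm : m = n by have := congr1 size e'; rewrite !size_mkseq.
  subst m.
  have ni : n < i.+1.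
    rewrite ltnS leqNgt; apply/negP => iln.
    have := congr1 (fun s => nth false s i) e'; rewrite /= !nth_mkseq // => h.
    by move: hi; rewrite h eqxx.
  apply: (leq_bigmax_seq (F := gA al) (P := xpredT) n) => //.
  by rewrite mem_iota.
exists (fun k => BB r (range (gB k))); split.
  move=> al; split; first exact: BB_sub.
  by apply: BB_infinite => //; apply: range_unbounded; apply: gB_inj.
split; last by move=> al; apply: BB_catches => //; apply: range_unbounded; apply: gB_inj.
move=> al be hne; apply/seteqP; split => // L /BBI HL.
rewrite -(BB0 r); apply: BB_mono HL => _ [[n _ <-] [m _ e]].
by move/(pcan_inj pickleK): e => [] ab _; exfalso; exact: hne (esym ab).
Qed.
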